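(* Let $W$ be a linear space over $\mathbb{K}\in\{\mathbb{R},\mathbb{C}\}$, let $0<q\le 1$, and let $V\neq\{0\}$ be a $W$-spreading $q$-space. Then the (algebraic) dimension of $V$ is at least $\mathfrak{c}$, the cardinality of the continuum.
   Context: For $0<q\le 1$, a $q$-norm on a linear space $X$ is a map $\|\cdot\|\colon X\to[0,\infty)$ with $\|x\|=0$ iff $x=0$, $\|\lambda x\|=|\lambda|\,\|x\|$, and $\|x+y\|^q\le\|x\|^q+\|y\|^q$; a $q$-Banach space is a space with a complete $q$-norm. $W^{\mathbb{N}}$ denotes the linear space of all $W$-valued sequences with coordinatewise operations. A $W$-spreading $q$-space is a linear subspace $V$ of $W^{\mathbb{N}}$ endowed with a complete $q$-norm $\|\cdot\|_V$ such that: whenever $(a_j)_{j=1}^\infty\in V$ and $\mathbb{N}_0=\{j_1<j_2<j_3<\cdots\}$ is an infinite subset of $\mathbb{N}$, the sequence $(b_k)_{k=1}^\infty$ defined by $b_k=a_i$ if $k=j_i$ and $b_k=0$ if $k\notin\mathbb{N}_0$ belongs to $V$ and satisfies $\|(b_k)_k\|_V\le\|(a_j)_j\|_V$. *)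

(* Defs.v *)
From HB Require Import structures.
From mathcomp Require Import all_boot all_order all_algebra.
From mathcomp Require Import reals exp.
From mathcomp Require Export complex.
Set Implicit Arguments.
Unset Strict Implicit.
Unset Printing Implicit Defensive.
Import Order.TTheory GRing.Theory Num.Theory.
Local Open Scope ring_scope.

(* Sequences in W are functions nat -> W (W^N with coordinatewise operations);
   the index set N = {1,2,...} of the paper is represented by nat = {0,1,...}. *)

Section SpreadingDefs.
Variables (R : realType) (K : pzRingType) (absK : K -> R) (W : lmodType K).

Definition seq0 : nat -> W := fun _ => 0.

Definition lin_subspace (V : (nat -> W) -> Prop) : Prop :=
  V seq0 /\
  (forall x y, V x -> V y -> V (fun n => x n + y n)) /\
  (forall (c : K) x, V x -> V (fun n => c *: x n)).

Definition is_qnorm (V : (nat -> W) -> Prop) (nrm : (nat -> W) -> R) (q : R) : Prop :=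
  (forall x, V x -> 0 <= nrm x) /\
  (forall x, V x -> (nrm x = 0 <-> x = seq0)) /\
  (forall (c : K) x, V x -> nrm (fun n => c *: x n) = absK c * nrm x) /\
  (forall x y, V x -> V y ->
     powR (nrm (fun n => x n + y n)) q <= powR (nrm x) q + powR (nrm y) q).

Definition qcomplete (V : (nat -> W) -> Prop) (nrm : (nat -> W) -> R) : Prop :=
  forall u : nat -> (nat -> W),
    (forall k, V (u k)) ->
    (forall e : R, 0 < e -> exists N : nat, forall m n : nat, (N <= m)%N -> (N <= n)%N ->
        nrm (fun i => u m i - u n i) < e) ->
    exists x, V x /\
      (forall e : R, 0 < e -> exists N : nat, forall n : nat, (N <= n)%N ->
        nrm (fun i => u n i - x i) < e).

(* spreading property: j enumerates increasingly an infinite subset N0 of N,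
   and b is the spread sequence: b (j i) = a i, b k = 0 for k outside N0. *)
Definition spreading (V : (nat -> W) -> Prop) (nrm : (nat -> W) -> R) : Prop :=
  forall (a : nat -> W) (j : nat -> nat),
    V a ->
    (forall i i', (i < i')%N -> (j i < j i')%N) ->
    forall b : nat -> W,
      (forall i, b (j i) = a i) ->
      (forall k, (forall i, j i <> k) -> b k = 0) ->
      V b /\ nrm b <= nrm a.

Definition spreading_qspace (V : (nat -> W) -> Prop) (nrm : (nat -> W) -> R) (q : R) : Prop :=
  lin_subspace V /\ is_qnorm V nrm q /\ qcomplete V nrm /\ spreading V nrm.

(* the algebraic dimension of V is at least the continuum (= #|R|):
   there is a linearly independent family in V indexed by R *)
Definition dim_ge_continuum (V : (nat -> W) -> Prop) : Prop :=
  exists f : R -> (nat -> W),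
    (forall r, V (f r)) /\
    (forall s : seq R, uniq s -> forall c : R -> K,
       (forall n, \sum_(r <- s) c r *: f r n = 0) ->
       forall r, r \in s -> c r = 0).

End SpreadingDefs.

(* Main.v *)
Require Import Defs.
From HB Require Import structures.
From mathcomp Require Import all_boot all_order all_algebra.
From mathcomp Require Import reals exp complex.
From mathcomp Require Import lra zify.
From Stdlib Require Import FunctionalExtensionality Classical.
Import Order.TTheory GRing.Theory Num.Theory.
Local Open Scope ring_scope.

Fixpoint Jf (e : nat -> nat) (n : nat) : nat :=
  match n with
  | 0 => (2 * e 0).+1
  | n'.+1 => 2 ^ (Jf e n') * (2 * e n'.+1).+1
  end.

Lemma Jf_step e n : (Jf e n < Jf e n.+1)%N.
Proof.
rewrite /=; apply: (leq_trans (ltn_expl _ (isT : (1 < 2)%N))).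
by rewrite leq_pmulr.
Qed.

Lemma Jf_inc e i i' : (i < i')%N -> (Jf e i < Jf e i')%N.
Proof.
elim: i' => // i' IH; rewrite ltnS leq_eqVlt => /orP [/eqP -> | /IH h].
  exact: Jf_step.
exact: ltn_trans h (Jf_step e i').
Qed.

Lemma Jf_ge e i : (i <= Jf e i)%N.
Proof.
elim: i => // i IH; exact: leq_ltn_trans IH (Jf_step e i).
Qed.

Lemma Jf_pos e i : (0 < Jf e i)%N.
Proof. case: i => [//|i] /=; rewrite muln_gt0 expn_gt0. by []. Qed.

Lemma pow2odd (x y x' y' : nat) : (2 ^ x * (2 * y).+1 = 2 ^ x' * (2 * y').+1)%N -> x = x' /\ y = y'.
Proof.
elim: x x' => [|x IH] [|x'] /=.
- rewrite !expn0 !mul1n => h; split => //; lia.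
- rewrite mul1n expnS -mulnA => h; have := congr1 odd h.
  rewrite /= !oddM /=. by []. 
- rewrite mul1n expnS -mulnA => h; have := congr1 odd h.
  rewrite /= !oddM /=. by []. 
- rewrite !expnS -!mulnA => h.
  have [-> ->] : x = x' /\ y = y' by apply: IH; lia.
  by [].
Qed.

Lemma Jf_inj e e' n m : Jf e n = Jf e' m -> n = m /\ e n = e' n.
Proof.
elim: n m => [|n IH] [|m] /=.
- move=> h; split => //. move: h. set a := e 0. set b := e' 0. move=> h. lia.
- rewrite -(mul1n (2 * e 0).+1) -(expn0 2) => /pow2odd [h _].
  by have := Jf_pos e' m; rewrite -h.
- rewrite -(mul1n (2 * e' 0).+1) -(expn0 2) => /pow2odd [h _].
  by have := Jf_pos e n; rewrite h.
- move=> /pow2odd [/IH [-> _] ->]; by [].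
Qed.

Section Spread.
Variables (W : zmodType).

Definition sp (e : nat -> nat) (z : nat -> W) (n : nat) : W :=
  \sum_(i < n.+1) (if Jf e i == n then z i else 0).

Lemma sp_J e z i : sp e z (Jf e i) = z i.
Proof.
rewrite /sp (bigD1 (Ordinal (leq_ltn_trans (Jf_ge e i) (ltnSn _)))) //= eqxx.
rewrite big1 ?addr0 // => k /eqP hk.
case: eqP => // /esym h; exfalso; apply: hk; apply: val_inj => /=.
by have [hh _] := Jf_inj e e _ _ h.
Qed.

Lemma sp_out e z n : (forall i, Jf e i <> n) -> sp e z n = 0.
Proof.
move=> h; rewrite /sp big1 // => k _; case: eqP => // /h [].
Qed.

End Spread.
Arguments sp {W}.
Arguments sp_J {W}.
Arguments sp_out {W}.

Section Sep.
Variable R : realType.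

Definition acode (n : nat) (r : R) : nat := pickle (Num.floor (r * 2%:R ^+ n)).

Lemma acode_sep (r r' : R) : r <> r' -> exists K, forall n, (K <= n)%N -> acode n r <> acode n r'.
Proof.
move=> hne; have hd : 0 < `|r - r'| by rewrite normr_gt0 subr_eq0; apply/eqP.
exists (Num.Def.archi_bound (`|r - r'|^-1)) => n hn.
move=> /(pcan_inj pickleK) hf.
have hb := archi_boundP (ltW (ltac:(by rewrite invr_gt0) : 0 < `|r - r'|^-1)).
have h1 : (Num.Def.archi_bound (`|r - r'|^-1))%:R <= (2 ^ n)%:R :> R.
  by rewrite ler_nat; apply: leq_trans hn (ltnW (ltn_expl _ _)).
have h2 : `|r - r'|^-1 < (2 ^ n)%:R :> R by apply: lt_le_trans hb h1.
have h3 : 1 < `|r - r'| * (2 ^ n)%:R.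
  by rewrite -(ltr_pdivrMl _ _ hd) mulr1.
have := floor_itv (r * 2%:R ^+ n); have := floor_itv (r' * 2%:R ^+ n).
rewrite hf -natrX !intrD.
have e : `|r * (2 ^ n)%:R - r' * (2 ^ n)%:R| = `|r - r'| * (2 ^ n)%:R :> R.
  by rewrite -mulrBl normrM normr_nat.
set A := r * _; set B := r' * _; set F := (Num.floor B)%:~R.
move=> /andP[h4 h5] /andP[h6 h7].
have : `|A - B| < 1 by rewrite ltr_norml; apply/andP; split; lra.
by rewrite e => h; have := lt_trans h3 h; rewrite ltxx.
Qed.

Lemma acode_sep_seq (r : R) (s : seq R) : exists K, forall r', r' \in s -> r' <> r ->
  forall n, (K <= n)%N -> acode n r' <> acode n r.
Proof.
elim: s => [|a s [K IH]]; first by exists 0%N.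
case: (eqVneq a r) => [->|har].
  exists K => r'; rewrite inE => /orP[/eqP -> //|]; exact: IH.
have [K' HK'] := acode_sep _ _ (elimN eqP har).
exists (maxn K K') => r'; rewrite inE => /orP[/eqP -> _ n hn|h1 h2 n hn].
  by apply: HK'; apply: leq_trans hn; rewrite leq_maxr.
by apply: IH => //; apply: leq_trans hn; rewrite leq_maxl.
Qed.

End Sep.
Arguments acode {R}.
Arguments acode_sep {R}.
Arguments acode_sep_seq {R}.

Section Indep.
Variables (R : realType) (K : fieldType) (W : lmodType K).
Variables (V : (nat -> W) -> Prop) (nrm : (nat -> W) -> R).

Lemma dim_of_inf (z : nat -> W) : spreading V nrm -> V z ->
  (forall N, exists p, (N <= p)%N /\ z p <> 0) -> dim_ge_continuum R V.
Proof.
move=> Hsp Vz Hinf.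
pose f (r : R) := sp (fun n => acode n r) z.
exists f; split.
  move=> r; have [] // := Hsp z (Jf (fun n => acode n r)) Vz
     (fun i i' => Jf_inc _ i i') (f r) (fun i => sp_J _ z i) (fun k hk => sp_out _ z k hk).
move=> s us c H r rs.
have [Kb HK] := acode_sep_seq r s.
have [i [hi zi]] := Hinf Kb.
have := H (Jf (fun n => acode n r) i).
rewrite (bigD1_seq r) //= big1_seq; last first.
  move=> r' /andP[hr' r's]; rewrite /f sp_out ?scaler0 // => m hm.
  have [hmi ha] := Jf_inj _ _ _ _ hm.
  apply: (HK r' r's (elimN eqP hr') m) => //; by rewrite hmi.
rewrite addr0 /f sp_J => /eqP; rewrite scaler_eq0 => /orP[/eqP //|/eqP h].
by exfalso; apply: zi.
Qed.
End Indep.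

Set Implicit Arguments.
Unset Strict Implicit.

Section Ana.
Variables (R : realType) (K : fieldType) (absK : K -> R) (W : lmodType K).
Variables (q : R) (V : (nat -> W) -> Prop) (nrm : (nat -> W) -> R).
Hypothesis Hq : 0 < q.
Hypothesis HS : spreading_qspace absK V nrm q.
Hypothesis habs1 : absK (-1) = 1.

Definition sub (u v : nat -> W) := fun n => u n - v n.
Definition rho u := nrm u `^ q.

Lemma Vadd u v : V u -> V v -> V (fun n => u n + v n).
Proof. by case: HS => [[_ [h _]] _]; apply: h. Qed.
Lemma VZ c u : V u -> V (fun n => c *: u n).
Proof. by case: HS => [[_ [_ h]] _]; apply: h. Qed.
Lemma Vsub u v : V u -> V v -> V (sub u v).
Proof.
move=> hu hv; have := Vadd hu (VZ (-1) hv).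
by have -> : (fun n => u n + (-1) *: v n) = sub u v
  by apply: functional_extensionality => n; rewrite scaleN1r.
Qed.
Lemma nrm_ge0 u : V u -> 0 <= nrm u.
Proof. by case: HS => [_ [[h _] _]]; apply: h. Qed.
Lemma nrm_eq0 u : V u -> nrm u = 0 -> u = seq0 W.
Proof. by case: HS => [_ [[_ [h _]] _]] hu /(h u hu). Qed.
Lemma nrmZ c u : V u -> nrm (fun n => c *: u n) = absK c * nrm u.
Proof. by case: HS => [_ [[_ [_ [h _]]] _]]; apply: h. Qed.
Lemma rho_tri u v : V u -> V v -> rho (fun n => u n + v n) <= rho u + rho v.
Proof. by case: HS => [_ [[_ [_ [_ h]]] _]]; apply: h. Qed.
Lemma rho_ge0 u : 0 <= rho u.
Proof. exact: powR_ge0. Qed.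

Lemma nrm_sym u v : V u -> V v -> nrm (sub u v) = nrm (sub v u).
Proof.
move=> hu hv.
have -> : sub v u = (fun n => (-1) *: sub u v n).
  by apply: functional_extensionality => n; rewrite scaleN1r /sub opprB.
by rewrite nrmZ ?habs1 ?mul1r //; apply: Vsub.
Qed.

Lemma rho_sym u v : V u -> V v -> rho (sub u v) = rho (sub v u).
Proof. by move=> hu hv; rewrite /rho nrm_sym. Qed.

Lemma rho_subtri u v w : V u -> V v -> V w ->
  rho (sub u w) <= rho (sub u v) + rho (sub v w).
Proof.
move=> hu hv hw.
have -> : sub u w = (fun n => sub u v n + sub v w n).
  by apply: functional_extensionality => n; rewrite /sub addrA subrK.
by apply: rho_tri; apply: Vsub.
Qed.

Lemma lt_rho u e : V u -> 0 < e -> nrm u < e -> rho u < e `^ q.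
Proof.
move=> hu he h; apply: (gt0_ltr_powR Hq) => //; rewrite nnegrE ?(ltW he) //.
exact: nrm_ge0.
Qed.

Lemma rho_lt u e : V u -> 0 < e -> rho u < e `^ q -> nrm u < e.
Proof.
move=> hu he h; rewrite ltNge; apply/negP => h2.
have : e `^ q <= rho u.
  apply: (ge0_ler_powR (ltW Hq)) => //; rewrite nnegrE ?(ltW he) //.
  exact: nrm_ge0.
by rewrite leNgt h.
Qed.

Lemma root_q eps : 0 < eps -> exists e, 0 < e /\ e `^ q = eps.
Proof.
move=> he; exists (eps `^ q^-1); split; first exact: powR_gt0.
by rewrite -powRrM mulVf ?gt_eqF // powRr1 // ltW.
Qed.

Variable M : nat.
Definition D (u : nat -> W) := fun p => if (M <= p)%N then u (p - M)%N else 0.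

Lemma D_sp u : V u -> V (D u) /\ nrm (D u) <= nrm u.
Proof.
case: HS => [_ [_ [_ Hsp]]] hu.
apply: (Hsp u (fun i => i + M)%N hu).
- move=> i i' h; lia.
- by move=> i; rewrite /D leq_addl addnK.
- move=> k hk; rewrite /D; case: leqP => // hk'.
  by exfalso; apply: (hk (k - M)%N); rewrite subnK.
Qed.

Lemma rho_D u : V u -> rho (D u) <= rho u.
Proof.
move=> hu; have [h1 h2] := D_sp hu.
apply: (ge0_ler_powR (ltW Hq)) => //; rewrite nnegrE; exact: nrm_ge0.
Qed.

Variables (x : nat -> W) (t0 : K) (tau : R).
Hypotheses (Vx : V x) (htau : absK t0 = tau) (tau0 : 0 <= tau) (tauq : tau `^ q = 2^-1).

Definition stp (a : nat -> W) := fun p => x p + t0 *: D a p.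

Lemma V_stp a : V a -> V (stp a).
Proof. move=> ha; apply: Vadd => //; apply: VZ; exact: (D_sp ha).1. Qed.

Lemma sub_stp a b : sub (stp a) (stp b) = fun p => t0 *: D (sub a b) p.
Proof.
apply: functional_extensionality => p; rewrite /sub /stp /D.
case: leqP => _; last by rewrite subrr scaler0.
by rewrite scalerBr opprD addrACA subrr add0r.
Qed.

Lemma rho_stp a b : V a -> V b -> rho (sub (stp a) (stp b)) <= 2^-1 * rho (sub a b).
Proof.
move=> ha hb; rewrite sub_stp /rho nrmZ; last exact: (D_sp (Vsub ha hb)).1.
rewrite htau powRM // ?tauq; last exact: nrm_ge0 (D_sp (Vsub ha hb)).1.
rewrite ler_pM2l ?invr_gt0 ?ltr0n //.
exact: rho_D (Vsub ha hb).
Qed.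


Fixpoint useq (n : nat) : nat -> W :=
  match n with 0 => x | n'.+1 => stp (useq n') end.

Lemma V_useq n : V (useq n).
Proof. elim: n => [//|n IH] /=; exact: V_stp. Qed.

Let C := rho (sub (useq 1) (useq 0)).
Let h : R := 2^-1.

Lemma rho_d n : rho (sub (useq n.+1) (useq n)) <= C * h ^+ n.
Proof.
elim: n => [|n IH]; first by rewrite expr0 mulr1.
rewrite /= (le_trans (rho_stp (V_useq n.+1) (V_useq n))) //.
rewrite exprS mulrCA ler_pM2l //; by rewrite /h invr_gt0 ltr0n.
Qed.

Lemma C_ge0 : 0 <= C. Proof. exact: rho_ge0. Qed.

Lemma rho_cauchy n k : rho (sub (useq (n + k)) (useq n)) <= C * (2 * h ^+ n - 2 * h ^+ (n + k)).
Proof.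
elim: k => [|k IH].
  rewrite addn0 subrr mulr0.
  have -> : sub (useq n) (useq n) = seq0 W.
    by apply: functional_extensionality => p; rewrite /sub subrr.
  case: HS => [_ [[_ [h0 _]] _]]; have := (h0 (seq0 W)).
  case: HS => [[V0 _] _] => /(_ V0) [_ hz].
  by rewrite /rho hz // powR0 ?gt_eqF.
rewrite addnS (le_trans (rho_subtri (V_useq (n + k).+1) (V_useq (n + k)) (V_useq n))) //.
rewrite (le_trans (lerD (rho_d (n + k)) IH)) //.
rewrite -mulrDr; apply: ler_wpM2l; first exact: C_ge0.
rewrite exprS /h. lra.
Qed.


Lemma h_ge0 : 0 <= h. Proof. by rewrite /h invr_ge0 ler0n. Qed.

Lemma cauchy_aux n m : (n <= m)%N -> rho (sub (useq m) (useq n)) <= 2 * C * h ^+ n.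
Proof.
move=> hnm; rewrite -(subnKC hnm) (le_trans (rho_cauchy _ _)) //.
have := C_ge0; have : 0 <= h ^+ (n + (m - n)) by apply: exprn_ge0; exact: h_ge0.
set a := h ^+ _; set b := h ^+ _ => ha hc.
nra.
Qed.

Lemma tail eps : 0 < eps -> exists N, forall n, (N <= n)%N -> 2 * C * h ^+ n < eps.
Proof.
move=> he; have hc : 0 <= 2 * C / eps by rewrite divr_ge0 ?(ltW he) // mulr_ge0 ?C_ge0.
exists (Num.Def.archi_bound (2 * C / eps)) => n hn.
have hb := archi_boundP hc.
have h1 : (Num.Def.archi_bound (2 * C / eps))%:R <= (2 ^ n)%:R :> R.
  by rewrite ler_nat; apply: leq_trans hn (ltnW (ltn_expl _ _)).
have h2 : 2 * C / eps < (2 ^ n)%:R by apply: lt_le_trans hb h1.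
have hp : 0 < (2 ^ n)%:R :> R by rewrite ltr0n expn_gt0.
have -> : h ^+ n = ((2 ^ n)%:R)^-1 by rewrite /h natrX exprVn.
rewrite ltr_pdivrMr //; move: h2; rewrite ltr_pdivrMr // => h2.
lra.
Qed.

Lemma useq_cauchy e : 0 < e -> exists N : nat, forall m n : nat, (N <= m)%N -> (N <= n)%N ->
        nrm (fun i => useq m i - useq n i) < e.
Proof.
move=> he; have [N HN] := tail (powR_gt0 q he).
exists N => m n hm hn.
have key : forall a b, (N <= b)%N -> (b <= a)%N -> nrm (sub (useq a) (useq b)) < e.
  move=> a b hb hba; apply: rho_lt he _; first exact: Vsub (V_useq _) (V_useq _).
  exact: le_lt_trans (cauchy_aux hba) (HN _ hb).
case: (leqP n m) => h0; first exact: key.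
change (nrm (sub (useq m) (useq n)) < e).
rewrite nrm_sym; [exact: key hm (ltnW h0)|exact: V_useq|exact: V_useq].
Qed.


Lemma fixpt : exists y, V y /\ forall p, y p = x p + t0 *: D y p.
Proof.
case: HS => [_ [_ [Hc _]]].
have [y [Vy Hy]] := Hc useq V_useq useq_cauchy.
exists y; split => //.
have Vw := V_stp Vy.
suff e : sub y (stp y) = seq0 W.
  move=> p; have := congr1 (fun f => f p) e; rewrite /sub /seq0 => /eqP.
  by rewrite subr_eq0 => /eqP.
apply: nrm_eq0 (Vsub Vy Vw) _.
have hle : rho (sub y (stp y)) <= 0.
  rewrite leNgt; apply/negP => hpos.
  set a := rho _ in hpos.
  have [e [he he']] := root_q (ltac:(lra) : 0 < a / 4).
  have [N HN] := Hy e he.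
  have r1 : rho (sub (useq N.+1) y) < a / 4.
    by rewrite -he'; apply: lt_rho (Vsub (V_useq _) Vy) he (HN N.+1 (leqnSn N)).
  have r0 : rho (sub (useq N) y) < a / 4.
    by rewrite -he'; apply: lt_rho (Vsub (V_useq _) Vy) he (HN N (leqnn N)).
  have t1 := rho_subtri Vy (V_useq N.+1) Vw.
  rewrite (rho_sym Vy (V_useq _)) in t1.
  have t2 := rho_stp (V_useq N) Vy.
  rewrite -/(useq N.+1) in t2.
  have hg := rho_ge0 (sub (useq N) y).
  rewrite -/a in t1.
  lra.
have h0 : rho (sub y (stp y)) = 0 by apply: le_anti; rewrite hle rho_ge0.
exact: powR_eq0_eq0 h0.
Qed.

Hypotheses (hM : forall p, (M <= p)%N -> x p = 0) (i0 : nat) (hi0 : (i0 < M)%N)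
  (xi0 : x i0 <> 0) (t00 : t0 <> 0).

Lemma coord y (hy : forall p, y p = x p + t0 *: D y p) k :
  y (k * M + i0)%N = t0 ^+ k *: x i0.
Proof.
elim: k => [|k IH].
  by rewrite mul0n add0n hy /D leqNgt hi0 scaler0 addr0 expr0 scale1r.
rewrite hy hM ?mulSn -?addnA ?leq_addr // /D leq_addr addKn IH.
by rewrite add0r scalerA exprS.
Qed.

Lemma inf_supp : exists y, V y /\ forall N, exists p, (N <= p)%N /\ y p <> 0.
Proof.
have [y [Vy hy]] := fixpt.
exists y; split => // N; exists (N * M + i0)%N; split.
  apply: leq_trans (leq_addr _ _); apply: leq_pmulr; exact: leq_ltn_trans hi0.
rewrite coord // => /eqP; rewrite scaler_eq0 expf_eq0 => /orP[/andP[_ /eqP //]|/eqP //].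
Qed.

End Ana.

Lemma general (R : realType) (K : fieldType) (absK : K -> R) (W : lmodType K) (q : R)
  (V : (nat -> W) -> Prop) (nrm : (nat -> W) -> R) :
  0 < q -> spreading_qspace absK V nrm q -> absK (-1) = 1 ->
  (exists x, V x /\ x <> seq0 W) ->
  (exists t0, t0 <> 0 /\ absK t0 = (2^-1) `^ q^-1) ->
  dim_ge_continuum R V.
Proof.
move=> Hq HS habs [x [Vx xn0]] [t0 [t00 ht0]].
have Hsp : spreading V nrm by case: HS => [_ [_ [_ h]]].
case: (classic (forall N, exists p, (N <= p)%N /\ x p <> 0)) => Hinf.
  exact: dim_of_inf Hsp Vx Hinf.
have [M hM] : exists M, forall p, (M <= p)%N -> x p = 0.
  apply: NNPP => H'; apply: Hinf => N; apply: NNPP => H2; apply: H'.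
  exists N => p hp; apply: NNPP => H3; apply: H2; by exists p.
have [i0 xi0] : exists i0, x i0 <> 0.
  apply: NNPP => H'; apply: xn0; apply: functional_extensionality => p.
  by apply: NNPP => H3; apply: H'; exists p.
have hi0 : (i0 < M)%N by rewrite ltnNge; apply/negP => /hM.
have tau0 : 0 <= (2^-1 : R) `^ q^-1 by apply: powR_ge0.
have tauq : ((2^-1 : R) `^ q^-1) `^ q = 2^-1.
  by rewrite -powRrM mulVf ?gt_eqF // powRr1 // invr_ge0 ler0n.
have [y [Vy Hy]] := inf_supp Hq HS habs Vx ht0 tau0 tauq hM hi0 xi0 t00.
exact: dim_of_inf Hsp Vy Hy.
Qed.

Theorem lemma3p1 :
  (* case K = R *)
  (forall (R : realType) (W : lmodType R) (q : R)
          (V : (nat -> W) -> Prop) (nrm : (nat -> W) -> R),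
      0 < q <= 1 ->
      spreading_qspace (@Num.norm R R) V nrm q ->
      (exists x, V x /\ x <> seq0 W) ->
      dim_ge_continuum R V) /\
  (* case K = C = R[i] *)
  (forall (R : realType) (W : lmodType R[i]) (q : R)
          (V : (nat -> W) -> Prop) (nrm : (nat -> W) -> R),
      0 < q <= 1 ->
      spreading_qspace (@ComplexField.Normc.normc R) V nrm q ->
      (exists x, V x /\ x <> seq0 W) ->
      dim_ge_continuum R V).
Proof.
split.
- move=> R W q V nrm /andP[Hq _] HS Hx.
  apply: general Hq HS _ Hx _; first by rewrite normrN1.
  have hp : 0 < (2^-1 : R) `^ q^-1 by apply: powR_gt0; rewrite invr_gt0 ltr0n.
  exists ((2^-1 : R) `^ q^-1); split; first by apply/eqP; rewrite gt_eqF.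
  by rewrite ger0_norm // ltW.
- move=> R W q V nrm /andP[Hq _] HS Hx.
  apply: general Hq HS _ Hx _; first by rewrite normcN ComplexField.Normc.normc1.
  have hp : 0 < (2^-1 : R) `^ q^-1 by apply: powR_gt0; rewrite invr_gt0 ltr0n.
  have hn : ComplexField.Normc.normc (((2^-1 : R) `^ q^-1)%:C)%C = (2^-1 : R) `^ q^-1.
    by rewrite /= expr0n /= addr0 sqrtr_sqr ger0_norm // ltW.
  exists (((2^-1 : R) `^ q^-1)%:C)%C; split => //.
  by move=> h; move: hn; rewrite h ComplexField.Normc.normc0 => /eqP; rewrite eq_sym gt_eqF.
Qed.
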